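(* Let $X$ be a metrically strictly systolic complex. Then there is a weight function $w$ on the corners of the 2-simplices of $X$ making $(X,w)$ a strictly systolic angled complex.
   Context: A quasi-simplicial complex is a simplicial complex in which multiple edges between two vertices are allowed, but no loops and no 2-simplices with two or more edges in common; complexes are locally finite. It is 3-flag if whenever it contains three faces of a tetrahedron it contains the whole tetrahedron. For a vertex $v$, $\mathrm{lk}(v)$ is the geometric link of $v$ in the 2-skeleton (a graph with a vertex for each edge at $v$ and an edge for each corner at $v$ of a 2-simplex). A metrically strictly systolic complex is a simply connected 3-flag quasi-simplicial complex $X$ whose 2-skeleton carries a piecewise Euclidean metric with finitely many isometry classes of simplices, such that, assigning to each edge of each vertex link the Euclidean angle of the corresponding corner (the angular distance), (a) the weak triangle inequality holds: for every vertex $v$ and edges $\alpha_{12},\alpha_{23},\alpha_{13}$ of $\mathrm{lk}(v)$ with $\alpha_{ij}$ from $v_i$ to $v_j$, the angle of $\alpha_{13}$ is at most the sum of the angles of $\alpha_{12}$ and $\alpha_{23}$; and (b) every 2-full cycle in every vertex link has angular length (sum of angles of its edges) strictly greater than $2\pi$. Here a simple cycle of length $>3$ in $\mathrm{lk}(v)$ is 2-full if no edge of $\mathrm{lk}(v)$ joins two vertices of the cycle having a common neighbour in the cycle. An angled complex is a quasi-simplicial complex $X$ with a weight function $w$ assigning a nonnegative real number to each corner of each 2-simplex, with finite image, satisfying the weak triangle inequality as in (a) with $w$ in place of angles. It is locally $2\pi$-large if every 2-full cycle in every vertex link has $w$-length $\geq 2\pi$. A strictly systolic angled complex is a simply connected,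 locally $2\pi$-large, 3-flag angled complex in which the sum of the three weights of each 2-simplex is $<\pi$. *)

(* Defs.v *)
From Stdlib Require Import Reals List.
Open Scope R_scope.

(** * Combinatorial model of a (locally finite) quasi-simplicial complex,
      recorded up to dimension 3 (the only dimensions the statement uses). *)

Inductive i3 : Type := J0 | J1 | J2.
Inductive i4 : Type := K0 | K1 | K2 | K3.

Definition nxt (i : i3) : i3 := match i with J0 => J1 | J1 => J2 | J2 => J0 end.

(** Raw data: vertices, edges (with two endpoints; multiple edges allowed),
    2-simplices (three vertices [fv f i] and three edges [fe f i], the edge
    [fe f i] being opposite to the vertex [fv f i]) and 3-simplices (four
    2-simplices [tf t p] as faces). *)
Record Complex := mkComplex {
  V : Type; E : Type; F : Type; T : Type;
  esrc : E -> V; etgt : E -> V;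
  fv : F -> i3 -> V; fe : F -> i3 -> E;
  tf : T -> i4 -> F
}.

Arguments esrc {_}. Arguments etgt {_}. Arguments fv {_}. Arguments fe {_}.
Arguments tf {_}.

Section Defs.
Variable X : Complex.

Definition joins (e : E X) (a b : V X) : Prop :=
  (esrc e = a /\ etgt e = b) \/ (esrc e = b /\ etgt e = a).

Definition incident (e : E X) (v : V X) : Prop := esrc e = v \/ etgt e = v.

Definition face_has_edge (f : F X) (e : E X) : Prop := exists i, fe f i = e.

Definition tet_data (a : i4 -> V X) (e : i4 -> i4 -> E X) : Prop :=
  (forall p q, p <> q -> a p <> a q) /\
  (forall p q, p <> q -> joins (e p q) (a p) (a q) /\ e p q = e q p).

(** face [ff p] is the face of the tetrahedron (a,e) opposite to vertex p *)
Definition tet_face (e : i4 -> i4 -> E X) (p : i4) (f : F X) : Prop :=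
  forall q r, q <> p -> r <> p -> q <> r -> face_has_edge f (e q r).

Definition is_tet_boundary (ff : i4 -> F X) : Prop :=
  exists a e, tet_data a e /\ forall p, tet_face e p (ff p).

Definition quasi_simplicial : Prop :=
  (forall e : E X, esrc e <> etgt e) /\
  (forall (f : F X) i j, i <> j -> fv f i <> fv f j) /\
  (forall f i, joins (fe f i) (fv f (nxt i)) (fv f (nxt (nxt i)))) /\
  (forall f g e1 e2, f <> g -> face_has_edge f e1 -> face_has_edge g e1 ->
       face_has_edge f e2 -> face_has_edge g e2 -> e1 = e2) /\
  (forall t, is_tet_boundary (tf t)).

Definition locally_finite : Prop :=
  (forall v : V X, exists l : list (E X), forall e, incident e v -> In e l) /\
  (forall e : E X, exists l : list (F X), forall f i, fe f i = e -> In f l) /\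
  (forall f : F X, exists l : list (T X), forall t p, tf t p = f -> In t l).

(** 3-flag: whenever X contains three faces of a tetrahedron (the faces
    opposite to vertices 1,2,3), it contains a 3-simplex having them as faces. *)
Definition three_flag : Prop :=
  forall (a : i4 -> V X) (e : i4 -> i4 -> E X) (ff : i4 -> F X),
    tet_data a e ->
    (forall p, p <> K0 -> tet_face e p (ff p)) ->
    exists t : T X, forall p, p <> K0 -> exists q, tf t q = ff p.

(** ** Simple connectivity, via combinatorial edge paths *)
Definition dart := (E X * bool)%type.
Definition dsrc (d : dart) : V X := if snd d then esrc (fst d) else etgt (fst d).
Definition dtgt (d : dart) : V X := if snd d then etgt (fst d) else esrc (fst d).
Definition dflip (d : dart) : dart := (fst d, negb (snd d)).

Fixpoint walk (x : V X) (p : list dart) (y : V X) : Prop :=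
  match p with
  | nil => x = y
  | d :: p' => dsrc d = x /\ walk (dtgt d) p' y
  end.

(** elementary homotopies: cancel a backtrack, or replace two sides of a
    2-simplex by the third side *)
Inductive elem_move : list dart -> list dart -> Prop :=
  | mv_back : forall p q d, elem_move (p ++ d :: dflip d :: q) (p ++ q)
  | mv_tri : forall p q f d1 d2 d3,
      fst d1 <> fst d2 -> fst d2 <> fst d3 -> fst d1 <> fst d3 ->
      face_has_edge f (fst d1) -> face_has_edge f (fst d2) ->
      face_has_edge f (fst d3) ->
      dsrc d1 = dsrc d3 -> dtgt d1 = dsrc d2 -> dtgt d2 = dtgt d3 ->
      elem_move (p ++ d1 :: d2 :: q) (p ++ d3 :: q).

Inductive homotopic (x y : V X) : list dart -> list dart -> Prop :=
  | ht_refl : forall p, homotopic x y p p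
  | ht_step : forall p q, walk x p y -> walk x q y -> elem_move p q ->
      homotopic x y p q
  | ht_sym : forall p q, homotopic x y p q -> homotopic x y q p
  | ht_trans : forall p q r, homotopic x y p q -> homotopic x y q r ->
      homotopic x y p r.

Definition simply_connected : Prop :=
  inhabited (V X) /\
  (forall x y : V X, exists p, walk x p y) /\
  (forall (x : V X) p, walk x p x -> homotopic x x p nil).

(** A corner is a pair (f,i) (the corner of the 2-simplex f at fv f i).
    In lk(v) the corner (f,i) with fv f i = v is an edge joining the
    vertices (edges of X) fe f (nxt i) and fe f (nxt (nxt i)). *)
Definition corner_joins (v : V X) (f : F X) (i : i3) (x y : E X) : Prop :=
  fv f i = v /\
  ((fe f (nxt i) = x /\ fe f (nxt (nxt i)) = y) \/
   (fe f (nxt i) = y /\ fe f (nxt (nxt i)) = x)).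

Definition weak_triangle_ineq (w : F X -> i3 -> R) : Prop :=
  forall v (x1 x2 x3 : E X) f12 i12 f23 i23 f13 i13,
    corner_joins v f12 i12 x1 x2 ->
    corner_joins v f23 i23 x2 x3 ->
    corner_joins v f13 i13 x1 x3 ->
    w f13 i13 <= w f12 i12 + w f23 i23.

Fixpoint sum_upto (g : nat -> R) (n : nat) : R :=
  match n with O => 0 | S m => sum_upto g m + g m end.

(** A simple cycle of length n > 3 in lk(v): vertices x 0..x (n-1)
    (pairwise distinct edges of X) and link edges (cf i, ci i) joining
    x i and x ((i+1) mod n). *)
Definition link_cycle (v : V X) (n : nat) (x : nat -> E X)
    (cf : nat -> F X) (ci : nat -> i3) : Prop :=
  (3 < n)%nat /\
  (forall i j, (i < n)%nat -> (j < n)%nat -> x i = x j -> i = j) /\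
  (forall i, (i < n)%nat -> corner_joins v (cf i) (ci i) (x i) (x (S i mod n))).

Definition cyc_adj (n i k : nat) : Prop := k = S i mod n \/ i = S k mod n.

(** 2-full: no edge of lk(v) joins two vertices of the cycle having a common
    neighbour in the cycle. *)
Definition two_full (v : V X) (n : nat) (x : nat -> E X) : Prop :=
  forall i j k, (i < n)%nat -> (j < n)%nat -> (k < n)%nat -> i <> j ->
    cyc_adj n i k -> cyc_adj n j k ->
    ~ exists f l, corner_joins v f l (x i) (x j).

Definition cycle_length (w : F X -> i3 -> R) (n : nat)
    (cf : nat -> F X) (ci : nat -> i3) : R :=
  sum_upto (fun i => w (cf i) (ci i)) n.

Definition PE_metric (len : E X -> R) : Prop :=
  (forall e, 0 < len e) /\
  (forall f i, len (fe f i) < len (fe f (nxt i)) + len (fe f (nxt (nxt i)))) /\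
  (exists l : list R, forall e, In (len e) l).

(** Euclidean angle at the corner (f,i) (law of cosines). *)
Definition angle (len : E X -> R) (f : F X) (i : i3) : R :=
  let a := len (fe f (nxt i)) in
  let b := len (fe f (nxt (nxt i))) in
  let c := len (fe f i) in
  acos ((a * a + b * b - c * c) / (2 * a * b)).

Definition metrically_strictly_systolic (len : E X -> R) : Prop :=
  quasi_simplicial /\ locally_finite /\ simply_connected /\ three_flag /\
  PE_metric len /\
  weak_triangle_ineq (angle len) /\
  (forall v n x cf ci, link_cycle v n x cf ci -> two_full v n x ->
      cycle_length (angle len) n cf ci > 2 * PI).

Definition angled (w : F X -> i3 -> R) : Prop :=
  quasi_simplicial /\ locally_finite /\
  (forall f i, 0 <= w f i) /\
  (exists l : list R, forall f i, In (w f i) l) /\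
  weak_triangle_ineq w.

Definition locally_2pi_large (w : F X -> i3 -> R) : Prop :=
  forall v n x cf ci, link_cycle v n x cf ci -> two_full v n x ->
    cycle_length w n cf ci >= 2 * PI.

Definition strictly_systolic_angled (w : F X -> i3 -> R) : Prop :=
  angled w /\ simply_connected /\ locally_2pi_large w /\ three_flag /\
  (forall f, w f J0 + w f J1 + w f J2 < PI).

End Defs.

(* Main.v *)
Require Import Defs.
From Stdlib Require Import Reals Lra Psatz List Lia.

Definition Pp a b c := (a+b+c)*(-a+b+c)*(a-b+c)*(a+b-c).

Lemma cs_lem a b c : 0 < b -> 0 < c -> 0 < Pp a b c ->
  let u := (b*b+c*c-a*a)/(2*b*c) in
  (-1 < u < 1) /\ sqrt (1 - u²) = sqrt (Pp a b c) / (2*b*c).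
Proof.
  intros hb hc hP u.
  assert (E : 1 - u² = Pp a b c / ((2*b*c)*(2*b*c))).
  { unfold u, Pp, Rsqr. field. lra. }
  assert (Hpos : 0 < 1 - u²).
  { rewrite E. apply Rdiv_lt_0_compat; [lra|]. apply Rmult_lt_0_compat; nra. }
  split.
  - unfold Rsqr in Hpos. split; nra.
  - apply sqrt_lem_1; [lra| |].
    + unfold Rdiv; apply Rmult_le_pos; [apply sqrt_pos| left; apply Rinv_0_lt_compat; nra].
    + rewrite E. assert (H := sqrt_sqrt (Pp a b c)). replace (sqrt (Pp a b c) / (2 * b * c) * (sqrt (Pp a b c) / (2 * b * c))) with (sqrt (Pp a b c) * sqrt (Pp a b c) / ((2*b*c)*(2*b*c))) by (field; lra).
      rewrite H by lra. reflexivity.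
Qed.

Lemma tri_sum a b c : 0 < a -> 0 < b -> 0 < c -> a < b + c -> b < c + a -> c < a + b ->
  acos ((b*b + c*c - a*a)/(2*b*c)) + acos ((c*c+a*a-b*b)/(2*c*a))
  + acos ((a*a+b*b-c*c)/(2*a*b)) = PI.
Proof.
  intros ha hb hc t1 t2 t3.
  assert (hP : 0 < Pp a b c).
  { unfold Pp. repeat apply Rmult_lt_0_compat; lra. }
  assert (hP2 : 0 < Pp b c a) by (unfold Pp in *; nra).
  assert (hP3 : 0 < Pp c a b) by (unfold Pp in *; nra).
  assert (e2 : Pp b c a = Pp a b c) by (unfold Pp; ring).
  assert (e3 : Pp c a b = Pp a b c) by (unfold Pp; ring).
  destruct (cs_lem a b c hb hc hP) as [[u1 u1'] s1].
  destruct (cs_lem b c a hc ha hP2) as [[u2 u2'] s2].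
  destruct (cs_lem c a b ha hb hP3) as [[u3 u3'] s3].
  rewrite e2 in s2. rewrite e3 in s3.
  set (K := sqrt (Pp a b c)) in *.
  assert (hK : 0 < K) by (apply sqrt_lt_R0; lra).
  assert (KK : K * K = Pp a b c) by (apply sqrt_sqrt; lra).
  set (x1 := (b*b + c*c - a*a)/(2*b*c)) in *.
  set (x2 := (c*c+a*a-b*b)/(2*c*a)) in *.
  set (x3 := (a*a+b*b-c*c)/(2*a*b)) in *.
  assert (cA := cos_acos x1 ltac:(lra)). assert (sA := sin_acos x1 ltac:(lra)).
  assert (cB := cos_acos x2 ltac:(lra)). assert (sB := sin_acos x2 ltac:(lra)).
  assert (cC := cos_acos x3 ltac:(lra)). assert (sC := sin_acos x3 ltac:(lra)).
  assert (bA := acos_bound x1). assert (bB := acos_bound x2). assert (bC := acos_bound x3).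
  set (A := acos x1) in *. set (B := acos x2) in *. set (C := acos x3) in *.
  assert (Hs : sin (A + B) = K / (2*a*b)).
  { rewrite sin_plus, sA, sB, cA, cB, s1, s2. unfold x1, x2. field. lra. }
  assert (Hc : cos (A + B) = cos (PI - C)).
  { rewrite cos_plus, sA, sB, cA, cB, s1, s2, cos_minus, cos_PI, sin_PI, cC.
    unfold x1, x2, x3.
    replace (K / (2 * b * c) * (K / (2 * c * a))) with (K*K / (4*a*b*c*c)) by (field; lra).
    rewrite KK. unfold Pp. field. lra. }
  assert (AB : A + B <= PI).
  { destruct (Rle_or_lt (A+B) PI) as [h|h]; auto.
    destruct (Rle_or_lt (2*PI) (A+B)) as [h'|h'].
    - assert (A = PI) by lra. assert (B = PI) by lra.
      assert (sin (A+B) = 0). { replace (A+B) with (2*PI) by lra. apply sin_2PI. }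
      assert (0 < K / (2*a*b)) by (apply Rdiv_lt_0_compat; nra). lra.
    - assert (sin (A+B) < 0) by (apply sin_lt_0; lra).
      assert (0 < K / (2*a*b)) by (apply Rdiv_lt_0_compat; nra). lra. }
  assert (A + B = PI - C) by (apply cos_inj; lra).
  lra.
Qed.

Lemma gap (t : R) (L : list R) : exists d, 0 < d /\ forall x, In x L -> x > t -> x >= t + d.
Proof.
  induction L as [|y L [d [hd H]]].
  - exists 1. split; [lra|]. intros x [].
  - destruct (Rle_or_lt y t) as [hy|hy].
    + exists d. split; auto. intros x [<-|hx] hxt; [lra|auto].
    + exists (Rmin d (y - t)). split; [apply Rmin_pos; lra|].
      intros x [<-|hx] hxt.
      * assert (Rmin d (y - t) <= y - t) by apply Rmin_r. lra.
      * assert (Rmin d (y - t) <= d) by apply Rmin_l. specialize (H x hx hxt). lra.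
Qed.

Fixpoint sums (A : list R) (n : nat) : list R :=
  match n with
  | O => 0 :: nil
  | S k => flat_map (fun s => map (fun a => s + a) A) (sums A k)
  end.

Lemma sum_upto_in A g n : (forall i, (i < n)%nat -> In (g i) A) -> In (sum_upto g n) (sums A n).
Proof.
  induction n; intros H; simpl; [auto|].
  apply in_flat_map. exists (sum_upto g n). split; [apply IHn; intros; apply H; lia|].
  apply in_map. apply H. lia.
Qed.

Lemma sum_upto_ge g n m : (forall i, (i < n)%nat -> m <= g i) -> INR n * m <= sum_upto g n.
Proof.
  induction n; intros H; [simpl; lra|].
  rewrite S_INR; simpl sum_upto. assert (m <= g n) by (apply H; lia).
  assert (INR n * m <= sum_upto g n) by (apply IHn; intros; apply H; lia). lra.
Qed.

Lemma sum_upto_scale g n c : sum_upto (fun i => c * g i) n = c * sum_upto g n.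
Proof. induction n; simpl; [ring|rewrite IHn; ring]. Qed.

Theorem proposition2p13 (X : Complex) (len : E X -> R) :
  metrically_strictly_systolic X len ->
  exists w : F X -> i3 -> R, strictly_systolic_angled X w.
Proof.
  intros [QS [LF [SC [TF [[Hpos [Htri [l Hl]]] [WTI Hcyc]]]]]].
  set (AL := flat_map (fun a => flat_map (fun b => map (fun c =>
          acos ((a*a+b*b-c*c)/(2*a*b))) l) l) l).
  assert (HAL : forall f i, In (angle X len f i) AL).
  { intros f i. unfold angle, AL. apply in_flat_map. exists (len (Defs.fe f (nxt i))); split; [apply Hl|].
    apply in_flat_map. exists (len (Defs.fe f (nxt (nxt i)))); split; [apply Hl|].
    apply in_map_iff. exists (len (Defs.fe f i)). split; [reflexivity|apply Hl]. }
  assert (Hang : forall f i, 0 < angle X len f i < PI).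
  { intros f i. unfold angle.
    assert (h1 := Htri f i). assert (h2 := Htri f (nxt i)). assert (h3 := Htri f (nxt (nxt i))).
    assert (p1 := Hpos (Defs.fe f i)). assert (p2 := Hpos (Defs.fe f (nxt i))).
    assert (p3 := Hpos (Defs.fe f (nxt (nxt i)))).
    replace (nxt (nxt (nxt i))) with i in * by (destruct i; reflexivity).
    revert h1 h2 h3 p1 p2 p3.
    generalize (len (Defs.fe f i)) (len (Defs.fe f (nxt i))) (len (Defs.fe f (nxt (nxt i)))).
    intros c0 a b h1 h2 h3 p1 p2 p3.
    assert (hP : 0 < Pp c0 a b) by (unfold Pp; repeat apply Rmult_lt_0_compat; lra).
    apply acos_bound_lt. exact (proj1 (cs_lem c0 a b p2 p3 hP)). }
  destruct (gap 0 AL) as [d0 [hd0 Hd0]].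
  assert (Hm : forall f i, d0 <= angle X len f i).
  { intros f i. assert (H := Hd0 _ (HAL f i) ltac:(apply (Hang f i))). lra. }
  destruct (INR_archimed d0 (2*PI+1) hd0) as [N HN].
  destruct (gap (2*PI) (flat_map (fun k => sums AL k) (seq 0 N))) as [d1 [hd1 Hd1]].
  set (dl := Rmin d1 1).
  assert (hdl : 0 < dl) by (apply Rmin_pos; lra).
  assert (Hcyc' : forall v n x cf ci, link_cycle X v n x cf ci -> two_full X v n x ->
      cycle_length X (angle X len) n cf ci >= 2 * PI + dl).
  { intros v n x cf ci Hl1 Hl2. assert (Hc := Hcyc v n x cf ci Hl1 Hl2).
    unfold cycle_length in *.
    assert (dl <= d1) by apply Rmin_l. assert (dl <= 1) by apply Rmin_r.
    destruct (Nat.lt_ge_cases n N) as [hn|hn].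
    - assert (Hin : In (sum_upto (fun i => angle X len (cf i) (ci i)) n)
                 (flat_map (fun k => sums AL k) (seq 0 N))).
      { apply in_flat_map. exists n. split; [apply in_seq; lia|].
        apply sum_upto_in. intros; apply HAL. }
      specialize (Hd1 _ Hin Hc). lra.
    - assert (INR N <= INR n) by (apply le_INR; lia).
      assert (INR n * d0 <= sum_upto (fun i => angle X len (cf i) (ci i)) n)
        by (apply sum_upto_ge; intros; apply Hm).
      nra. }
  assert (hPI := PI_RGT_0).
  set (c := 2*PI / (2*PI + dl)).
  assert (hc0 : 0 < c) by (apply Rdiv_lt_0_compat; lra).
  assert (hc1 : c < 1).
  { unfold c. apply (Rmult_lt_reg_r (2*PI+dl)); [lra|]. field_simplify; lra. }
  exists (fun f i => c * angle X len f i).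
  split; [|split; [exact SC|split; [|split; [exact TF|]]]].
  - split; [exact QS|split; [exact LF|split; [|split]]].
    + intros f i. assert (H := Hang f i). nra.
    + exists (map (fun y => c * y) AL). intros f i. apply in_map. apply HAL.
    + intros v x1 x2 x3 f12 i12 f23 i23 f13 i13 h1 h2 h3.
      assert (H := WTI v x1 x2 x3 f12 i12 f23 i23 f13 i13 h1 h2 h3). nra.
  - intros v n x cf ci Hl1 Hl2. assert (H := Hcyc' v n x cf ci Hl1 Hl2).
    unfold cycle_length in *. rewrite sum_upto_scale.
    assert (c * (2*PI+dl) = 2*PI) by (unfold c; field; lra). nra.
  - intros f.
    assert (Hs : angle X len f J0 + angle X len f J1 + angle X len f J2 = PI).
    { unfold angle; simpl.
      apply tri_sum; try apply Hpos.
      - exact (Htri f J0).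
      - exact (Htri f J1).
      - exact (Htri f J2). }
    nra.
Qed.
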